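(* Let $w=(i,\epsilon)\in\mathcal W_0(d)$ and $i_0=\min\{i(l): l\in[d]\}$. Then for every block $\{l,m\}$ of the pair partition $\pi(w)$ we have $i(l)=i_0$ if and only if $i(m)=i_0$.
   Context: Fix an integer $p\ge2$; $F_p=\langle x_0,x_1,\dots\mid x_nx_k=x_kx_{n+p-1}\ \forall k<n\rangle$ with identity $e$. For $d\in\mathbb N$ and $[d]=\{1,\dots,d\}$, a word of length $d$ is a tuple $w=(x_{i(1)}^{\epsilon(1)},\dots,x_{i(d)}^{\epsilon(d)})$ with $i:[d]\to\mathbb N_0$, $\epsilon:[d]\to\{1,-1\}$, written $w=(i,\epsilon)$; $\mathrm{eval}(w)=x_{i(1)}^{\epsilon(1)}\cdots x_{i(d)}^{\epsilon(d)}$; $\mathcal W(d)$ is the set of words of length $d$ and $\mathcal W_0(d)=\{w\in\mathcal W(d):\mathrm{eval}(w)=e\}$. Rewriting relations: ($\rightsquigarrow$) a consecutive pair $(x_a^{-1},x_b)$ is replaced by $(x_b,x_{a+p-1}^{-1})$ if $a>b$, by $(x_{b+p-1},x_a^{-1})$ if $a<b$, by $(x_b,x_a^{-1})$ if $a=b$; ($\rightarrowtail$, on $\rightsquigarrow$-irreducible words) $(x_a,x_b)$ with $b-p+1>a$ is replaced by $(x_{b-p+1},x_a)$, and $(x_a^{-1},x_b^{-1})$ with $a-p+1>b$ by $(x_b^{-1},x_{a-p+1}^{-1})$. The normal form $\mathrm{NF}(w)$ is obtained by applying $\rightsquigarrow$ until irreducible and then $\rightarrowtail$ until irreducible (well defined).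 Each step swaps two adjacent letters; $\tau(w)\in S_d$ is defined by letting $\tau(w)(l)$ be the position in $\mathrm{NF}(w)$ of the letter originating from the $l$-th letter of $w$. For $w\in\mathcal W_0(d)$ ($d$ even), $\pi(w)$ is the pair partition of $[d]$ whose blocks are the pairs $\{l,m\}$ with $\tau(w)(l)+\tau(w)(m)=d+1$ (the image under $\tau(w)^{-1}$ of the rainbow partition $\{\{1,d\},\{2,d-1\},\dots,\{d/2,d/2+1\}\}$). *)

(* Defs.v *)
From mathcomp Require Import all_boot.
Set Implicit Arguments. Unset Strict Implicit. Unset Printing Implicit Defensive.

(* A letter x_a^eps is encoded as (a, b) with b = true iff eps = 1
   (b = false iff eps = -1).  A word of length d is a sequence of d letters;
   positions are 0-indexed (position l here is position l+1 in the paper). *)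
Definition letter := (nat * bool)%type.
Definition word := seq letter.

(* Two words evaluate to the same element iff they are related by the
   congruence generated by free cancellations x x^-1 = e, x^-1 x = e and the
   defining relations (monoid presentation of the group). *)
Inductive gstep (p : nat) : word -> word -> Prop :=
| gs_cancelPN (u v : word) (a : nat) :
    gstep p (u ++ [:: (a, true); (a, false)] ++ v) (u ++ v)
| gs_cancelNP (u v : word) (a : nat) :
    gstep p (u ++ [:: (a, false); (a, true)] ++ v) (u ++ v)
| gs_rel (u v : word) (n k : nat) : k < n ->
    gstep p (u ++ [:: (n, true); (k, true)] ++ v)
            (u ++ [:: (k, true); (n + p - 1, true)] ++ v).

Inductive geq (p : nat) : word -> word -> Prop :=
| geq_refl w : geq p w w
| geq_step w1 w2 : gstep p w1 w2 -> geq p w1 w2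
| geq_sym w1 w2 : geq p w1 w2 -> geq p w2 w1
| geq_trans w1 w2 w3 : geq p w1 w2 -> geq p w2 w3 -> geq p w1 w3.

Definition eval_is_e (p : nat) (w : word) : Prop := geq p w [::].

(* ---------- Rewriting with tracking of letter origins ---------------------
   A tracked word is a sequence of (letter, origin) where origin is the
   (0-indexed) position in the original word the letter comes from. *)
Definition tword := seq (letter * nat).

Inductive rw1 (p : nat) : tword -> tword -> Prop :=
| rw1_gt (s1 s2 : tword) (a b o1 o2 : nat) : b < a ->
    rw1 p (s1 ++ [:: ((a, false), o1); ((b, true), o2)] ++ s2)
          (s1 ++ [:: ((b, true), o2); ((a + p - 1, false), o1)] ++ s2)
| rw1_lt (s1 s2 : tword) (a b o1 o2 : nat) : a < b ->
    rw1 p (s1 ++ [:: ((a, false), o1); ((b, true), o2)] ++ s2)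
          (s1 ++ [:: ((b + p - 1, true), o2); ((a, false), o1)] ++ s2)
| rw1_eq (s1 s2 : tword) (a o1 o2 : nat) :
    rw1 p (s1 ++ [:: ((a, false), o1); ((a, true), o2)] ++ s2)
          (s1 ++ [:: ((a, true), o2); ((a, false), o1)] ++ s2).

Inductive rw2 (p : nat) : tword -> tword -> Prop :=
| rw2_pos (s1 s2 : tword) (a b o1 o2 : nat) : a + p <= b ->
    rw2 p (s1 ++ [:: ((a, true), o1); ((b, true), o2)] ++ s2)
          (s1 ++ [:: ((b.+1 - p, true), o2); ((a, true), o1)] ++ s2)
| rw2_neg (s1 s2 : tword) (a b o1 o2 : nat) : b + p <= a ->
    rw2 p (s1 ++ [:: ((a, false), o1); ((b, false), o2)] ++ s2)
          (s1 ++ [:: ((b, false), o2); ((a.+1 - p, false), o1)] ++ s2).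

Inductive star (T : Type) (R : T -> T -> Prop) : T -> T -> Prop :=
| star_refl x : star R x x
| star_step x y z : R x y -> star R y z -> star R x z.

Definition irreducible (T : Type) (R : T -> T -> Prop) (x : T) : Prop :=
  forall y, ~ R x y.

Definition track (w : word) : tword := zip w (iota 0 (size w)).

Definition NF_track (p : nat) (w : word) (t : tword) : Prop :=
  exists t1, [/\ star (rw1 p) (track w) t1, irreducible (rw1 p) t1,
                 star (rw2 p) t1 t & irreducible (rw2 p) t].

Definition tau (t : tword) (l : nat) : nat := index l (map snd t).

(* {l, m} is a block of pi(w): tau(l) + tau(m) = d + 1 in 1-indexed terms,
   i.e. tau(l) + tau(m) = d - 1 in 0-indexed terms. *)
Definition pi_block (w : word) (t : tword) (l m : nat) : bool :=
  [&& l < size w, m < size w & tau t l + tau t m == (size w).-1].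

Definition idx (w : word) (l : nat) : nat := (nth (0, true) w l).1.
Definition imin (w : word) : nat :=
  foldr minn (head 0 (map fst w)) (map fst w).

(* Main.v *)
Require Import Defs.
From mathcomp Require Import all_boot zify.
From Stdlib Require Import FunctionalExtensionality.
Set Implicit Arguments. Unset Strict Implicit.

Definition stream := nat -> nat.
Definition scons (i : nat) (s : stream) : stream := fun k => if k is k'.+1 then s k' else i.
Definition stail (s : stream) : stream := fun k => s k.+1.
Definition point := (nat * stream)%type.

Section Act.
Variable p : nat.
Hypothesis p2 : 2 <= p.

Definition merge (a : nat) (x : point) : point :=
  let: (r, s) := x in
  if r < a then (r, s) else if r < a + p then (a, scons (r - a) s) else (r.+1 - p, s).
Definition split (a : nat) (x : point) : point :=
  let: (r, s) := x in
  if r < a then (r, s) else if r == a then (a + s 0, stail s) else (r + p - 1, s).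
Definition valid (x : point) := forall k, x.2 k < p.

Lemma merge_valid a x : valid x -> valid (merge a x).
Proof.
case: x => r s /= v; rewrite /merge.
case: ifP => // _; case: ifP => H //= [|k] //=; lia.
Qed.

Lemma split_valid a x : valid x -> valid (split a x).
Proof.
case: x => r s /= v; rewrite /split.
case: ifP => // _; case: ifP => H //= k; exact: v.
Qed.

Lemma splitK a x : valid x -> split a (merge a x) = x.
Proof.
case: x => r s v /=.
case: ifP => [H|H]; first by rewrite /= H.
case: ifP => [H2|H2] /=.
  rewrite ltnn eqxx /=; congr (_,_); lia.
have -> : r.+1 - p < a = false by lia.
have -> : (r.+1 - p == a) = false by lia.
congr (_,_); lia.
Qed.

Lemma mergeK a x : valid x -> merge a (split a x) = x.
Proof.
case: x => r s v /=.
case: ifP => [H|H]; first by rewrite /= H.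
case: ifP => [/eqP H2|H2] /=.
  subst r. have -> : a + s 0 < a = false by lia.
  have -> : a + s 0 < a + p by have := v 0; rewrite /=; lia.
  rewrite addKn; congr (_,_).
  by apply: functional_extensionality => -[|k].
have -> : r + p - 1 < a = false by lia.
have -> : r + p - 1 < a + p = false by lia.
congr (_,_); lia.
Qed.

Lemma merge_rel n k x : k < n -> merge n (merge k x) = merge k (merge (n + p - 1) x).
Proof.
case: x => r s H /=.
repeat (case: ifP => ? /=); try (exfalso; lia); try done.
have -> : (n + p - 1).+1 - p = n by lia.
have -> : r - (n + p - 1) = r.+1 - p - n by lia.
done.
Qed.

Lemma rel_gt a b x : valid x -> b < a -> split a (merge b x) = merge b (split (a + p - 1) x).
Proof.
move=> v ba; set y := split (a + p - 1) x.
have vy : valid y by apply: split_valid.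
have -> : x = merge (a + p - 1) y by rewrite /y mergeK.
by rewrite -merge_rel // splitK //; apply: merge_valid.
Qed.

Lemma rel_lt a b x : valid x -> a < b -> split a (merge b x) = merge (b + p - 1) (split a x).
Proof.
move=> v ab; set y := split a x.
have vy : valid y by apply: split_valid.
have -> : x = merge a y by rewrite /y mergeK.
by rewrite merge_rel // splitK //; apply: merge_valid.
Qed.

Lemma rel_pos a b x : a + p <= b -> merge a (merge b x) = merge (b.+1 - p) (merge a x).
Proof.
move=> ab; rewrite [RHS]merge_rel; last by lia.
by have -> : b.+1 - p + p - 1 = b by lia.
Qed.

Lemma rel_neg a b x : valid x -> b + p <= a ->
  split a (split b x) = split b (split (a.+1 - p) x).
Proof.
move=> v ba; set n := a.+1 - p; set z := split b (split n x).
have vz : valid z by apply/split_valid/split_valid.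
have e : merge n (merge b z) = merge b (merge a z).
  rewrite merge_rel; last by rewrite /n; lia.
  by have -> : n + p - 1 = a by rewrite /n; lia.
have : x = merge b (merge a z).
  by rewrite -e /z mergeK ?mergeK //; apply: split_valid.
move=> ->; rewrite splitK ?splitK //; exact: merge_valid.
Qed.

Definition lact (y : letter) := if y.2 then merge y.1 else split y.1.
Fixpoint act (w : word) (x : point) : point :=
  if w is y :: w' then lact y (act w' x) else x.

Lemma act_cat u v x : act (u ++ v) x = act u (act v x).
Proof. by elim: u => //= y u ->. Qed.

Lemma act_valid w x : valid x -> valid (act w x).
Proof.
elim: w => //= -[a [|]] w IH v /=; [apply: merge_valid | apply: split_valid]; exact: IH.
Qed.

Lemma geq_act w1 w2 : Defs.geq p w1 w2 -> forall x, valid x -> act w1 x = act w2 x.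
Proof.
elim=> {w1 w2} [//|w1 w2 st|w1 w2 _ IH|w1 w2 w3 _ IH1 _ IH2] x v.
- case: st => [u v' a|u v' a|u v' n k kn]; rewrite !act_cat /=.
  + by rewrite /lact /= mergeK //; apply: act_valid.
  + by rewrite /lact /= splitK //; apply: act_valid.
  + by rewrite /lact /= merge_rel.
- by rewrite IH.
- by rewrite IH1 // IH2.
Qed.

Lemma rw1_act s s' : rw1 p s s' -> forall x, valid x -> act (map fst s) x = act (map fst s') x.
Proof.
case=> [s1 s2 a b o1 o2 H|s1 s2 a b o1 o2 H|s1 s2 a o1 o2] x v; rewrite !map_cat !act_cat /= /lact /=;
  have v2 := act_valid (map fst s2) v.
- by rewrite rel_gt.
- by rewrite rel_lt.
- by rewrite splitK ?mergeK.
Qed.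

Lemma rw2_act s s' : rw2 p s s' -> forall x, valid x -> act (map fst s) x = act (map fst s') x.
Proof.
case=> s1 s2 a b o1 o2 H x v; rewrite !map_cat !act_cat /= /lact /=;
  have v2 := act_valid (map fst s2) v.
- by rewrite rel_pos.
- by rewrite rel_neg.
Qed.

Definition mergeL (a : nat) (q : nat * seq nat) : nat * seq nat :=
  let: (r, L) := q in
  if r < a then (r, L) else if r < a + p then (a, (r - a) :: L) else (r.+1 - p, L).
Fixpoint pact (I : seq nat) (r : nat) : nat * seq nat :=
  if I is a :: I' then mergeL a (pact I' r) else (r, [::]).
Fixpoint sapp (L : seq nat) (s : stream) : stream :=
  if L is i :: L' then scons i (sapp L' s) else s.
Definition pos (I : seq nat) : word := map (fun a => (a, true)) I.
Definition neg (I : seq nat) : word := map (fun a => (a, false)) I.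

Lemma act_pos I r s : act (pos I) (r, s) = ((pact I r).1, sapp (pact I r).2 s).
Proof.
elim: I => //= a I ->; rewrite /lact /=.
by case: (pact I r) => r' L /=; case: ifP => //; case: ifP.
Qed.

Lemma act_neg_pos I x : valid x -> act (neg I) (act (pos (rev I)) x) = x.
Proof.
elim: I x => //= b I IH x v.
rewrite rev_cons /pos map_rcons -cats1 act_cat /= /lact /=.
by rewrite IH ?splitK //; apply: merge_valid.
Qed.

Lemma mergeL_inj a q1 q2 : mergeL a q1 = mergeL a q2 -> q1 = q2.
Proof.
case: q1 q2 => r1 L1 [r2 L2] /=.
repeat (case: ifP => ? /=); move=> [] *; subst; try (exfalso; lia); try done.
- congr (_,_); lia.
- congr (_,_); lia.
Qed.

Lemma pact_nontriv a I r : pact (a :: I) r <> (a, [::]).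
Proof.
rewrite /=; case: (pact I r) => r' L /=.
repeat (case: ifP => ? /=); move=> [] *; subst; try (exfalso; lia); try done.
Qed.

Definition nfrel (a b : nat) := b < a + p.

Lemma pact_triv I r : sorted nfrel I -> (if I is a :: _ then a < r else true) ->
  exists r', pact I r' = (r, [::]).
Proof.
elim: I r => [|a I IH] r /=; first by exists r.
move=> srt ar.
have [r' e] : exists r', pact I r' = (r + p - 1, [::]).
  apply: IH; first exact: path_sorted srt.
  case: I srt  => // b I /= /andP[]; rewrite /nfrel; lia.
exists r'; rewrite e /=.
have -> : r + p - 1 < a = false by lia.
have -> : r + p - 1 < a + p = false by lia.
congr (_,_); lia.
Qed.

Lemma pact_uniq I J : sorted nfrel I -> sorted nfrel J ->
  (forall r, pact I r = pact J r) -> I = J.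
Proof.
elim: I J => [|a I IH] [|b J] //.
- by move=> _ _ /(_ b) e; have := @pact_nontriv b J b; rewrite -e.
- by move=> _ _ /(_ a) e; have := @pact_nontriv a I a; rewrite e.
move=> sI sJ e.
have [ab|ba|ab] := ltngtP a b.
- have [r' e'] := pact_triv sI (ab : (if a :: I is c :: _ then c < b else true)).
  by have := @pact_nontriv b J r'; rewrite -e e'.
- have [r' e'] := pact_triv sJ (ba : (if b :: J is c :: _ then c < a else true)).
  by have := @pact_nontriv a I r'; rewrite e e'.
subst b; congr (_ :: _); apply: IH.
- exact: path_sorted sI.
- exact: path_sorted sJ.
- by move=> r; apply: (@mergeL_inj a); have := e r.
Qed.
End Act.

Lemma star_inv T (R : T -> T -> Prop) (P : T -> Prop) x y :
  star R x y -> (forall a b, R a b -> P a -> P b) -> P x -> P y.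
Proof. by move=> st H; elim: st => // a b z /H; auto. Qed.

Lemma sapp_inj L1 L2 : sapp L1 (fun _ => 0) = sapp L2 (fun _ => 0) ->
  sapp L1 (fun _ => 1) = sapp L2 (fun _ => 1) -> L1 = L2.
Proof.
elim: L1 L2 => [|i L1 IH] [|j L2] //=.
- by move=> /(congr1 (fun f => f 0)) /= h0 /(congr1 (fun f => f 0)) /= h1; lia.
- by move=> /(congr1 (fun f => f 0)) /= h0 /(congr1 (fun f => f 0)) /= h1; lia.
move=> e0 e1; have := congr1 (fun f => f 0) e0 => /= ->; congr (_ :: _).
apply: IH; apply: functional_extensionality => k.
- exact: (congr1 (fun f => f k.+1) e0).
- exact: (congr1 (fun f => f k.+1) e1).
Qed.

Lemma split_at (T : Type) (x0 : T) (t : seq T) i : i.+1 < size t ->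
  t = take i t ++ [:: nth x0 t i; nth x0 t i.+1] ++ drop i.+2 t.
Proof.
move=> H; rewrite -{1}(cat_take_drop i t) (drop_nth x0) 1?(drop_nth x0 (n := i.+1)) //.
exact: ltnW.
Qed.

Definition e0 : letter * nat := ((0, true), 0).

Lemma irr2_pos p t i : irreducible (rw2 p) t -> i.+1 < size t ->
  (nth e0 t i).1.2 -> (nth e0 t i.+1).1.2 ->
  (nth e0 t i.+1).1.1 < (nth e0 t i).1.1 + p.
Proof.
move=> irr H; have E := split_at e0 H.
move: E; case: (nth e0 t i) => [[a sa] o1]; case: (nth e0 t i.+1) => [[b sb] o2] /= E.
case: sa E; case: sb => // E _ _; rewrite ltnNge; apply/negP => ab.
by have := @rw2_pos p (take i t) (drop i.+2 t) a b o1 o2 ab; rewrite -E; apply: irr.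
Qed.

Lemma irr2_neg p t i : irreducible (rw2 p) t -> i.+1 < size t ->
  ~~ (nth e0 t i).1.2 -> ~~ (nth e0 t i.+1).1.2 ->
  (nth e0 t i).1.1 < (nth e0 t i.+1).1.1 + p.
Proof.
move=> irr H; have E := split_at e0 H.
move: E; case: (nth e0 t i) => [[a sa] o1]; case: (nth e0 t i.+1) => [[b sb] o2] /= E.
case: sa E; case: sb => // E _ _; rewrite ltnNge; apply/negP => ab.
by have := @rw2_neg p (take i t) (drop i.+2 t) a b o1 o2 ab; rewrite -E; apply: irr.
Qed.

Definition sgR (b1 b2 : bool) := b1 || ~~ b2.
Definition sg (t : tword) := map (fun e => e.1.2) t.

Lemma irr1_sorted p t : irreducible (rw1 p) t -> sorted sgR (sg t).
Proof.
elim: t => [|e1 t IH] //= irr.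
case: t IH irr => [|e2 t] //= IH irr; apply/andP; split; last first.
  apply: IH => y st; apply: (irr (e1 :: y)).
  by case: st => *; [apply: (rw1_gt _ (e1 :: _)) | apply: (rw1_lt _ (e1 :: _)) | apply: (rw1_eq _ (e1 :: _))].
case: e1 e2 irr {IH} => [[a [|]] o1] [[b [|]] o2] //= irr.
have [ba|ab|ab] := ltngtP b a.
- by case: (irr _ (rw1_gt p [::] t o1 o2 ba)).
- by case: (irr _ (rw1_lt p [::] t o1 o2 ab)).
- by subst b; case: (irr _ (rw1_eq p [::] t a o1 o2)).
Qed.

Lemma rw2_sg p s s' : rw2 p s s' -> sg s = sg s'.
Proof. by case=> *; rewrite /sg !map_cat. Qed.

Definition ixs (t : tword) := map (fun e => e.1.1) t.

Lemma palin p t : 2 <= p -> (forall x, valid p x -> act p (map fst t) x = x) ->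
  sorted sgR (sg t) -> irreducible (rw2 p) t -> rev (ixs t) = ixs t.
Proof.
move=> p2 Hact Hsg irr.
set k := find (fun e : letter * nat => ~~ e.1.2) t.
set P := take k t; set N := drop k t.
have ks : k <= size t by apply: find_size.
have sP : size P = k by rewrite size_take_min; apply/minn_idPl.
have aP : all (fun e : letter * nat => e.1.2) P.
  apply/(all_nthP e0) => i; rewrite sP => ik.
  by rewrite nth_take //; have := before_find e0 ik; case: (nth e0 t i) => [[? []] ?].
have aN : all (fun e : letter * nat => ~~ e.1.2) N.
  case: (boolP (has (fun e : letter * nat => ~~ e.1.2) t)) => hs; last first.
    by rewrite /N /k hasNfind // drop_size.
  have kt : k < size t by rewrite /k -has_find.
  have := nth_find e0 hs; rewrite -/k => nk.
  have : sorted sgR (sg N) by rewrite /sg /N map_drop; apply: drop_sorted.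
  rewrite /N (drop_nth e0 kt) /= => pth.
  rewrite nk /=; have := order_path_min _ pth.
  move: pth; rewrite (negbTE nk) => pth.
  have tr : transitive sgR by move=> [] [] [].
  by have := order_path_min tr pth; rewrite /sg all_map.
set PI := ixs P; set NI := ixs N.
have mP : map fst P = pos PI.
  rewrite /pos /PI /ixs -map_comp; apply/eq_in_map => e /(allP aP).
  by case: e => [[a []] o].
have mN : map fst N = neg NI.
  rewrite /neg /NI /ixs -map_comp; apply/eq_in_map => e /(allP aN).
  by case: e => [[a []] o].
have Hpa : forall x, valid p x -> act p (pos PI) x = act p (pos (rev NI)) x.
  move=> x v; have := Hact (act p (pos (rev NI)) x) (act_valid _ _ v).
  rewrite -{1}(cat_take_drop k t) -/P -/N map_cat act_cat mP mN act_neg_pos //.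
  by apply.
have Hpact : forall r, pact p PI r = pact p (rev NI) r.
  move=> r.
  have v0 : valid p (r, fun _ => 0) by move=> ? /=; lia.
  have v1 : valid p (r, fun _ => 1) by move=> ? /=; lia.
  have := Hpa _ v0; have := Hpa _ v1; rewrite !act_pos.
  case: (pact p PI r) => a L; case: (pact p (rev NI) r) => b M /= [_ e1] [-> e0'].
  by rewrite (sapp_inj e0' e1).
have sPI : sorted (nfrel p) PI.
  apply/(sortedP 0) => i; rewrite size_map sP => ik.
  rewrite /PI /ixs !(nth_map e0) ?sP //; last by lia.
  rewrite /P !nth_take //; last by lia.
  rewrite /nfrel; apply: irr2_pos => //; first lia.
  - have ik' : i < k by lia.
    by have := before_find e0 ik'; case: (nth e0 t i) => [[? []] ?].
  - by have := before_find e0 ik; case: (nth e0 t i.+1) => [[? []] ?].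
have sNI : sorted (nfrel p) (rev NI).
  rewrite rev_sorted; apply/(sortedP 0) => i; rewrite size_map => ik.
  have i1 : i < size N by apply: ltnW.
  rewrite /NI /ixs (nth_map e0 _ _ ik) (nth_map e0 _ _ i1).
  have sN : size N = size t - k by rewrite size_drop.
  have m1 : nth e0 N i \in N by apply: mem_nth.
  have m2 : nth e0 N i.+1 \in N by apply: mem_nth.
  move: (allP aN _ m1) (allP aN _ m2).
  rewrite /N !nth_drop /nfrel addnS => n1 n2; apply: irr2_neg => //.
  by move: ik; rewrite sN; lia.
have E := @pact_uniq p p2 _ _ sPI sNI Hpact.
have -> : ixs t = PI ++ NI by rewrite -(cat_take_drop k t) /ixs map_cat.
by rewrite E rev_cat revK.
Qed.

Definition goodE (w : word) (c : nat) (e : letter * nat) :=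
  (c <= e.1.1) && ((e.1.1 == c) == (idx w e.2 == c)).

Lemma goodE_le w c a sg o : goodE w c ((a, sg), o) -> c <= a.
Proof. by case/andP. Qed.

Lemma goodE_up w c a sg o y sg' : goodE w c ((a, sg), o) -> c < a -> c < y ->
  goodE w c ((y, sg'), o).
Proof.
rewrite /goodE /= => /andP[_ /eqP e] ca cy.
have ac : (a == c) = false by apply/eqP; lia.
have yc : (y == c) = false by apply/eqP; lia.
by rewrite ac in e; rewrite -e yc eqxx andbT ltnW.
Qed.

Lemma goodE_sg w c a sg o sg' : goodE w c ((a, sg), o) -> goodE w c ((a, sg'), o).
Proof. by []. Qed.

Lemma rw1_good p w c s s' : 1 <= p -> rw1 p s s' -> all (goodE w c) s -> all (goodE w c) s'.
Proof.
move=> p1; case => [s1 s2 a b o1 o2 H|s1 s2 a b o1 o2 H|s1 s2 a o1 o2];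
  rewrite !all_cat /= !andbT => /and3P[-> /andP[g1 g2] ->] /=; rewrite ?andbT.
- have := goodE_le g2 => cb.
  by rewrite g2 /=; apply: goodE_up g1 _ _; lia.
- have := goodE_le g1 => ca.
  by rewrite g1 andbT; apply: goodE_up g2 _ _; lia.
- by rewrite g1 g2.
Qed.

Lemma rw2_good p w c s s' : 1 <= p -> rw2 p s s' -> all (goodE w c) s -> all (goodE w c) s'.
Proof.
move=> p1; case => [s1 s2 a b o1 o2 H|s1 s2 a b o1 o2 H];
  rewrite !all_cat /= !andbT => /and3P[-> /andP[g1 g2] ->] /=; rewrite ?andbT.
- have := goodE_le g1 => ca.
  by rewrite g1 andbT; apply: goodE_up g2 _ _; lia.
- have := goodE_le g2 => cb.
  by rewrite g2 /=; apply: goodE_up g1 _ _; lia.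
Qed.

Lemma swap_perm (s1 s2 : tword) e1 e2 f1 f2 : f1.2 = e2.2 -> f2.2 = e1.2 ->
  perm_eq (map snd (s1 ++ [:: e1; e2] ++ s2)) (map snd (s1 ++ [:: f1; f2] ++ s2)).
Proof.
move=> h1 h2; rewrite !map_cat perm_cat2l perm_cat2r /= h1 h2.
by rewrite perm_sym; apply/permP => q /=; rewrite !addn0 addnC.
Qed.

Lemma rw1_perm p s s' : rw1 p s s' -> perm_eq (map snd s) (map snd s').
Proof. by case=> *; apply: swap_perm. Qed.

Lemma rw2_perm p s s' : rw2 p s s' -> perm_eq (map snd s) (map snd s').
Proof. by case=> *; apply: swap_perm. Qed.

Lemma imin_le w l : l < size w -> imin w <= idx w l.
Proof.
move=> lw; rewrite /imin /idx.
have : (nth (0, true) w l).1 \in map fst w by rewrite -(nth_map _ 0) ?mem_nth ?size_map.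
elim: (map fst w) (head 0 (map fst w)) => //= x L IH d.
rewrite in_cons => /orP[/eqP ->|/IH H]; first exact: geq_minl.
exact: leq_trans (geq_minr _ _) (H d).
Qed.

Theorem mainTheorem4 (p : nat) (w : word) (t : tword) (l m : nat) :
  2 <= p ->
  eval_is_e p w ->
  NF_track p w t ->
  pi_block w t l m ->
  (idx w l == imin w) = (idx w m == imin w).
Proof.
move=> p2 ev [t1 [st1 irr1 st2 irr2]] /and3P[ld md /eqP sum].
set c := imin w.
have sz : size (iota 0 (size w)) = size w by rewrite size_iota.
have good0 : all (goodE w c) (track w).
  apply/(all_nthP e0) => i; rewrite /track size_zip size_iota minnn => iw.
  rewrite (nth_zip (0, true) 0) // nth_iota // add0n /goodE /=.
  by rewrite imin_le //= eqxx.
have goodt : all (goodE w c) t.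
  apply: (star_inv st2 (P := all (goodE w c))); first by move=> a b; apply: rw2_good; lia.
  apply: (star_inv st1 (P := all (goodE w c))) good0 => a b; apply: rw1_good; lia.
have permt : perm_eq (map snd t) (iota 0 (size w)).
  have P0 : perm_eq (map snd (track w)) (iota 0 (size w)) by rewrite /track -/(unzip2 _) unzip2_zip ?sz.
  apply: (star_inv st2 (P := fun s => perm_eq (map snd s) (iota 0 (size w)))).
    by move=> a b /rw2_perm H; apply: perm_trans; rewrite perm_sym.
  apply: (star_inv st1 (P := fun s => perm_eq (map snd s) (iota 0 (size w)))) P0.
  by move=> a b /rw1_perm H; apply: perm_trans; rewrite perm_sym.
have actt : forall x, valid p x -> act p (map fst t) x = x.
  have A0 : forall x, valid p x -> act p (map fst (track w)) x = x.
    by move=> x v; rewrite /track -/(unzip1 _) unzip1_zip ?sz // (geq_act p2 ev).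
  apply: (star_inv st2 (P := fun s => forall x, valid p x -> act p (map fst s) x = x)).
    by move=> a b H Ha x v; rewrite -(rw2_act p2 H v) Ha.
  apply: (star_inv st1 (P := fun s => forall x, valid p x -> act p (map fst s) x = x)) A0.
  by move=> a b H Ha x v; rewrite -(rw1_act p2 H v) Ha.
have sgt : sorted sgR (sg t).
  apply: (star_inv st2 (P := fun s => sorted sgR (sg s))).
    by move=> a b /rw2_sg ->.
  exact: irr1_sorted irr1.
have pal := palin p2 actt sgt irr2.
have st : size t = size w by rewrite -(size_map snd) (perm_size permt) sz.
have stat : forall l, l < size w -> (idx w l == c) = (nth 0 (ixs t) (tau t l) == c).
  move=> l0 l0w.
  have l0in : l0 \in map snd t by rewrite (perm_mem permt) mem_iota.
  have it : tau t l0 < size t by rewrite -(size_map snd) index_mem.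
  rewrite /ixs (nth_map e0) //.
  have := allP goodt _ (mem_nth e0 it); rewrite /goodE => /andP[_ /eqP ->].
  by rewrite -(nth_map e0 0) // nth_index.
rewrite !stat //.
have it : tau t l < size t by rewrite -(size_map snd) index_mem (perm_mem permt) mem_iota.
have jt : tau t m < size t by rewrite -(size_map snd) index_mem (perm_mem permt) mem_iota.
rewrite -[in RHS]pal nth_rev; last by rewrite size_map.
rewrite size_map st.
by have -> : size w - (tau t m).+1 = tau t l by lia.
Qed.
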